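(* Let $\mathbf{x}\in\mathbb{R}^p$ be an observation with outcome $y\in\mathcal{Y}$, and $\lambda\ge 0$. Consider a generative density $p_\theta(\mathbf{x},\mathbf{s})$ with latent $\mathbf{s}\in\mathbb{R}^L$, a predictive model $p_\psi(y\mid\mathbf{s})$ and a variational encoder $q_\phi(\mathbf{s}\mid\mathbf{x})$, all infinitely differentiable in their parameters, where $\mathbf{s}\sim q_\phi(\mathbf{s}\mid\mathbf{x})$ is reparameterized as $\mathbf{s}=g_\phi(\epsilon,\mathbf{x})$ with $\epsilon\sim p(\epsilon)$ independent of $\phi,\mathbf{x}$, and gradients may be interchanged with expectations over $p(\epsilon)$. Consider the constrained problem $$\max_{\psi,\theta,\phi}\ \mathbb{E}_{q_\phi(\mathbf{s}\mid\mathbf{x})}\bigl[\log p_\theta(\mathbf{x},\mathbf{s})-\log q_\phi(\mathbf{s}\mid\mathbf{x})+\lambda\log p_\psi(y\mid\mathbf{s})\bigr]\quad\text{s.t.}\quad \nabla_\phi\,\mathbb{E}_{q_\phi(\mathbf{s}\mid\mathbf{x})}\bigl[\log p_\theta(\mathbf{x},\mathbf{s})-\log q_\phi(\mathbf{s}\mid\mathbf{x})\bigr]=0,$$ where, near the point of interest, the constraint determines $\phi=h(\theta)$ as a differentiable function of $\theta$ (by the implicit function theorem), and derivatives with respect to $\theta$ of terms depending on $\phi$ are taken through this dependence. Then at a stationary point of this problem: (i) $\phi$ satisfies the VAE stationarity condition $$\mathbb{E}_{p(\epsilon)}\Bigl[\nabla_\phi\bigl(\log p_\theta(\mathbf{x},g_\phi(\epsilon,\mathbf{x}))-\log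 q_\phi(g_\phi(\epsilon,\mathbf{x})\mid\mathbf{x})\bigr)\Bigr]=0;$$ (ii) $\theta$ satisfies $$\mathbb{E}_{p(\epsilon)}\bigl[\nabla_\theta\log p_\theta(\mathbf{x},g_\phi(\epsilon,\mathbf{x}))\bigr]=-\lambda\,\mathbb{E}_{p(\epsilon)}\bigl[\nabla_\theta\log p_\psi(y\mid g_\phi(\epsilon,\mathbf{x}))\bigr];$$ (iii) $\psi$, given $\phi$, satisfies the same stationarity condition as for the unconstrained supervised VAE objective, namely $\mathbb{E}_{p(\epsilon)}\bigl[\nabla_\psi\log p_\psi(y\mid g_\phi(\epsilon,\mathbf{x}))\bigr]=0$.
   Context: $\theta$ parameterizes the generative model, $\psi$ the classifier $p_\psi(y\mid\mathbf{s})$, and $\phi$ the encoder $q_\phi(\mathbf{s}\mid\mathbf{x})$ (which does not condition on $y$). The constraint (a first-order replacement of requiring $\phi$ to maximize the evidence lower bound for fixed $\theta$) forces the encoder to be a stationary point of the purely generative ELBO. In (ii), $\nabla_\theta\log p_\psi(y\mid g_\phi(\epsilon,\mathbf{x}))$ is nonzero only through the dependence $\phi=h(\theta)$ induced by the constraint. The objective is written for a single data pair $(\mathbf{x},y)$. *)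

(* Defs.v *)
From HB Require Import structures.
From mathcomp Require Import all_boot all_order all_algebra.
From mathcomp Require Import all_classical all_reals all_analysis.
Set Implicit Arguments. Unset Strict Implicit. Unset Printing Implicit Defensive.
Import Order.TTheory GRing.Theory Num.Theory.
Import numFieldNormedType.Exports.
Local Open Scope classical_set_scope.
Local Open Scope ring_scope.

Fixpoint Ck (R : realType) (V W : normedModType R) (k : nat) (f : V -> W)
  : Prop :=
  match k with
  | 0 => continuous f
  | k'.+1 => (forall z, differentiable f z) /\
             (forall v : V, Ck k' (fun z => 'D_v f z))
  end.

Definition smooth (R : realType) (V W : normedModType R) (f : V -> W) :=
  forall k, Ck k f.

Definition Expect (R : realType) d (T : measurableType d)
  (P : probability T R) (f : T -> R) : R := \int[P]_(e in setT) f e.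

Definition grad (R : realType) (n : nat) (f : 'rV[R]_n -> R) (z : 'rV[R]_n)
  : 'rV[R]_n := \row_i 'D_(delta_mx 0 i) f z.

Definition Evec (R : realType) d (T : measurableType d) (P : probability T R)
  (n : nat) (F : T -> 'rV[R]_n) : 'rV[R]_n :=
  \row_i Expect P (fun e => F e 0 i).

Definition grad_interchange (R : realType) d (T : measurableType d)
  (P : probability T R) (V : normedModType R) (f : V -> T -> R) (w : V) :=
  differentiable (fun w' => Expect P (f w')) w /\
  forall v : V, 'D_v (fun w' => Expect P (f w')) w =
                Expect P (fun e => 'D_v (fun w' => f w' e) w).

Section Model.
Variables (R : realType) (d : measure_display) (T : measurableType d)
  (P : probability T R) (p L a b c : nat) (Y : Type).
(* pd theta x s = p_theta(x,s);  qd phi s x = q_phi(s|x);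
   pc psi y s = p_psi(y|s);  g phi e x = g_phi(e,x) *)
Variables (pd : 'rV[R]_a -> 'rV[R]_p -> 'rV[R]_L -> R)
  (qd : 'rV[R]_b -> 'rV[R]_L -> 'rV[R]_p -> R)
  (pc : 'rV[R]_c -> Y -> 'rV[R]_L -> R)
  (g : 'rV[R]_b -> T -> 'rV[R]_p -> 'rV[R]_L)
  (x : 'rV[R]_p) (y : Y).

Definition elbo_eps (theta : 'rV[R]_a) (phi : 'rV[R]_b) (e : T) : R :=
  ln (pd theta x (g phi e x)) - ln (qd phi (g phi e x) x).

Definition sup_eps (psi : 'rV[R]_c) (phi : 'rV[R]_b) (e : T) : R :=
  ln (pc psi y (g phi e x)).

Definition ELBO theta phi : R := Expect P (elbo_eps theta phi).

Definition SUP psi phi : R := Expect P (sup_eps psi phi).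

Definition objective (lam : R) psi theta phi : R :=
  ELBO theta phi + lam * SUP psi phi.

Definition constraint theta phi : Prop :=
  grad (fun phi' => ELBO theta phi') phi = 0.
End Model.

(* Main.v *)
Require Import Defs.
From HB Require Import structures.
From mathcomp Require Import all_boot all_order all_algebra.
From mathcomp Require Import all_classical all_reals all_analysis.
Import Order.TTheory GRing.Theory Num.Theory.
Import numFieldNormedType.Exports.
Local Open Scope classical_set_scope.
Local Open Scope ring_scope.

Lemma quot_ext (R: numFieldType) (V1 V2 W: normedModType R) (f: V1 -> W) (g: V2 -> W) a b v u :
 (forall h : R, f (h *: v + a) - f a = g (h *: u + b) - g b) ->
 'D_v f a = 'D_u g b /\ (derivable f a v <-> derivable g b u).
Proof.
move=> H.
have E : (fun h : R => h^-1 *: ((f \o shift a) (h *: v) - f a)) =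
         (fun h => h^-1 *: ((g \o shift b) (h *: u) - g b)).
  by apply/funext => h /=; rewrite H.
by rewrite /derive /derivable E.
Qed.

Lemma D2 (R: numFieldType) (A B W: normedModType R) (F : A -> B -> W) t p u :
  'D_((0:A),u) (fun w : A*B => F w.1 w.2) (t,p) = 'D_u (F t) p /\
  (derivable (fun w : A*B => F w.1 w.2) (t,p) (0,u) <-> derivable (F t) p u).
Proof. by apply: quot_ext => h /=; rewrite scaler0 add0r. Qed.

Lemma D1 (R: numFieldType) (A B W: normedModType R) (F : A -> B -> W) t p u :
  'D_(u,(0:B)) (fun w : A*B => F w.1 w.2) (t,p) = 'D_u (fun t' => F t' p) t /\
  (derivable (fun w : A*B => F w.1 w.2) (t,p) (u,0) <-> derivable (fun t' => F t' p) t u).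
Proof. by apply: quot_ext => h /=; rewrite scaler0 add0r. Qed.

Lemma pair_add (R: numFieldType) (A B: normedModType R) (u v : B) :
  ((0:A), u + v) = (0,u) + (0,v).
Proof. by rewrite -{1}(addr0 (0:A)). Qed.
Lemma pair_scale (R: numFieldType) (A B: normedModType R) (k:R) (u : B) :
  ((0:A), k *: u) = k *: (0,u).
Proof. by rewrite -{1}(scaler0 _ k : k *: (0:A) = 0). Qed.
Lemma pair_split (R: numFieldType) (A B: normedModType R) (v : A) (u : B) :
  (v, u) = (v, 0) + (0, u).
Proof. by rewrite -{1}(addr0 v) -{1}(add0r u). Qed.

Lemma Expect_row (R : realType) d (T : measurableType d) (P : probability T R)
  n (F : T -> 'I_n -> R) i :
  Expect P (fun e => (\row_j F e j) 0 i) = Expect P (fun e => F e i).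
Proof. by congr Expect; apply/funext => e; rewrite mxE. Qed.

Lemma chain_pair (R: numFieldType) (A B W: normedModType R) (F : A * B -> W)
  (h : A -> B) t v : differentiable h t -> differentiable F (t, h t) ->
  'd (F \o (fun s => (s, h s))) t v = 'd F (t, h t) (v, 'd h t v).
Proof.
move=> dh dF.
have did : differentiable (@id A) t by apply: ex_diff; exact: is_diff_id.
have did' : 'd (@id A) t = id :> (A -> A) by apply: diff_val.
have dp : differentiable (fun s => (s, h s)) t := differentiable_pair did dh.
by rewrite (diff_comp dp dF) /= (diff_pair did dh) did'.
Qed.

Lemma fin_step (R : numFieldType) (k A B C : R) :
  A + k *: B = 0 -> B = C -> A = - k * C.
Proof. by move=> /eqP; rewrite addr_eq0 => /eqP -> ->; rewrite mulNr. Qed.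

Theorem proposition2
  (R : realType) (d : measure_display) (T : measurableType d)
  (P : probability T R) (p L a b c : nat) (Y : Type)
  (pd : 'rV[R]_a -> 'rV[R]_p -> 'rV[R]_L -> R)
  (qd : 'rV[R]_b -> 'rV[R]_L -> 'rV[R]_p -> R)
  (pc : 'rV[R]_c -> Y -> 'rV[R]_L -> R)
  (g : 'rV[R]_b -> T -> 'rV[R]_p -> 'rV[R]_L)
  (x : 'rV[R]_p) (y : Y) (lam : R) (h : 'rV[R]_a -> 'rV[R]_b)
  (psi0 : 'rV[R]_c) (theta0 : 'rV[R]_a) (phi0 : 'rV[R]_b)
  (* lambda >= 0 *)
  (hlam : 0 <= lam)
  (* densities are positive *)
  (pd_pos : forall th x' s, 0 < pd th x' s)
  (qd_pos : forall ph s x', 0 < qd ph s x')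
  (pc_pos : forall ps y' s, 0 < pc ps y' s)
  (* infinitely differentiable models *)
  (pd_smooth : forall x', smooth (fun w : 'rV[R]_a * 'rV[R]_L => pd w.1 x' w.2))
  (qd_smooth : forall x', smooth (fun w : 'rV[R]_b * 'rV[R]_L => qd w.1 w.2 x'))
  (pc_smooth : forall y', smooth (fun w : 'rV[R]_c * 'rV[R]_L => pc w.1 y' w.2))
  (g_smooth : forall e x', smooth (fun ph : 'rV[R]_b => g ph e x'))
  (* gradients may be interchanged with expectations over p(epsilon) *)
  (elbo_int : forall w : 'rV[R]_a * 'rV[R]_b,
      grad_interchange P (fun w' e => elbo_eps pd qd g x w'.1 w'.2 e) w)
  (sup_int : forall w : 'rV[R]_c * 'rV[R]_b,
      grad_interchange P (fun w' e => sup_eps pc g x y w'.1 w'.2 e) w)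
  (sup_h_int : forall ps, \forall th \near theta0,
      grad_interchange P (fun th' e => sup_eps pc g x y ps (h th') e) th)
  (* near the point of interest the constraint determines phi = h(theta),
     h differentiable *)
  (h_phi0 : h theta0 = phi0)
  (h_impl : \forall w \near (theta0, phi0),
      constraint P pd qd g x w.1 w.2 <-> w.2 = h w.1)
  (h_diff : \forall th \near theta0, differentiable h th)
  (* (psi0, theta0, phi0 = h theta0) is a stationary point of the problem *)
  (stat_psi : grad (fun ps => objective P pd qd pc g x y lam ps theta0 (h theta0)) psi0 = 0)
  (stat_theta : grad (fun th => objective P pd qd pc g x y lam psi0 th (h th)) theta0 = 0) :
  (* (i) *)
  Evec P (fun e => grad (fun ph => elbo_eps pd qd g x theta0 ph e) phi0) = 0 /\
  (* (ii) *)
  Evec P (fun e => grad (fun th => ln (pd th x (g phi0 e x))) theta0) =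
    - lam *: Evec P (fun e => grad (fun th => ln (pc psi0 y (g (h th) e x))) theta0) /\
  (* (iii) *)
  lam *: Evec P (fun e => grad (fun ps => ln (pc ps y (g phi0 e x))) psi0) = 0 /\
  (0 < lam -> Evec P (fun e => grad (fun ps => ln (pc ps y (g phi0 e x))) psi0) = 0).
Proof.
subst phi0.
set E := fun w : 'rV[R]_a * 'rV[R]_b => ELBO P pd qd g x w.1 w.2.
have cons0 : constraint P pd qd g x theta0 (h theta0).
  by have := nbhs_singleton h_impl => /= ->.
have consi : forall i, 'D_(delta_mx 0 i) (fun ph => ELBO P pd qd g x theta0 ph) (h theta0) = 0.
  by move=> i; move: cons0; rewrite /constraint => /(congr1 (fun M : 'rV[R]_b => M 0 i)); rewrite !mxE.
have [dE DE] := elbo_int (theta0, h theta0).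
have E0 : forall u, 'D_((0 : 'rV[R]_a), u) E (theta0, h theta0) = 'D_u (fun ph => ELBO P pd qd g x theta0 ph) (h theta0).
  by move=> u; exact: (@D2 _ _ _ _ (fun t p => ELBO P pd qd g x t p) _ _ _).1.
have dE' : differentiable E (theta0, h theta0) := dE.
have dd0 : forall u, 'd E (theta0, h theta0) ((0 : 'rV[R]_a), u) = 0.
  move=> u; rewrite (row_sum_delta u).
  apply: (big_ind (fun v => 'd E (theta0, h theta0) ((0 : 'rV[R]_a), v) = 0)).
  - exact: linear0.
  - by move=> u1 u2 H1 H2; rewrite pair_add linearD H1 H2 addr0.
  - by move=> j _; rewrite pair_scale linearZ /= -deriveE // E0 consi scaler0.
split.
  apply/rowP => i; rewrite !mxE.
  have H : 'D_((0:'rV[R]_a), delta_mx 0 i) E (theta0, h theta0) =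
    Expect P (fun e => 'D_((0:'rV[R]_a), delta_mx 0 i)
      (fun w' : 'rV[R]_a * 'rV[R]_b => elbo_eps pd qd g x w'.1 w'.2 e) (theta0, h theta0)) := DE _.
  rewrite E0 consi in H.
  rewrite [RHS]H; congr Expect; apply/funext => e; rewrite mxE.
  by rewrite (@D2 _ _ _ _ (fun t p => elbo_eps pd qd g x t p e) _ _ _).1.
split.
  apply/rowP => i; rewrite !mxE.
  set G1 := fun th => ELBO P pd qd g x th (h th).
  set G2 := fun th => SUP P pc g x y psi0 (h th).
  have dh : differentiable h theta0 := nbhs_singleton h_diff.
  have did : differentiable (@id 'rV[R]_a) theta0 by apply: ex_diff; exact: is_diff_id.
  have dpair : differentiable (fun th => (th, h th)) theta0 := differentiable_pair did dh.
  have dG1 : differentiable G1 theta0 := differentiable_comp dpair dE'.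
  have [dG2 DG2] := nbhs_singleton (sup_h_int psi0).
  have dG2' : differentiable G2 theta0 := dG2.
  have eqf : (fun th => objective P pd qd pc g x y lam psi0 th (h th)) = G1 + lam \*: G2.
    by apply/funext.
  have := congr1 (fun M : 'rV[R]_a => M 0 i) stat_theta.
  rewrite /grad !mxE eqf deriveD; last 2 first.
  - exact: diff_derivable.
  - exact/derivableZ/diff_derivable.
  rewrite deriveZ; last exact: diff_derivable.
  have H2 : 'D_(delta_mx 0 i) G2 theta0 = Expect P (fun e =>
     'D_(delta_mx 0 i) (fun th' => sup_eps pc g x y psi0 (h th') e) theta0) := DG2 _.
  have did' : 'd (@id 'rV[R]_a) theta0 = id :> ('rV[R]_a -> 'rV[R]_a) by apply: diff_val.
  have H1 : 'D_(delta_mx 0 i) G1 theta0 = Expect P (fun e =>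
     'D_(delta_mx 0 i) (fun th => ln (pd th x (g (h theta0) e x))) theta0).
    rewrite (deriveE _ dG1).
    have -> : 'd G1 theta0 = 'd (E \o (fun th => (th, h th))) theta0 by [].
    rewrite (@chain_pair _ _ _ _ E h theta0 _ dh dE') [(delta_mx 0 i, _)]pair_split linearD dd0 addr0.
    have H3 : 'D_(delta_mx 0 i, (0:'rV[R]_b)) E (theta0, h theta0) =
      Expect P (fun e => 'D_(delta_mx 0 i, (0:'rV[R]_b))
      (fun w' : 'rV[R]_a * 'rV[R]_b => elbo_eps pd qd g x w'.1 w'.2 e) (theta0, h theta0)) := DE _.
    rewrite -(deriveE _ dE') H3; congr Expect; apply/funext => e.
    rewrite (@D1 _ _ _ _ (fun t p => elbo_eps pd qd g x t p e) _ _ _).1.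
    apply: (proj1 (quot_ext _ _ _ _ _ _ _ _ _ _ _)) => t /=.
    by rewrite /elbo_eps opprB addrA subrK.
  rewrite H1 H2 !Expect_row.
  move=> Hs; apply/eqP; rewrite mulNr -addr_eq0; apply/eqP.
  exact: Hs.
set S := fun ps => SUP P pc g x y ps (h theta0).
have [dS DS] := sup_int (psi0, h theta0).
have dS' : differentiable (fun w : 'rV[R]_c * 'rV[R]_b => SUP P pc g x y w.1 w.2) (psi0, h theta0) := dS.
have derS : forall i, derivable S psi0 (delta_mx 0 i).
  move=> i; apply: (proj1 (proj2 (@D1 _ _ _ _ (fun t p => SUP P pc g x y t p) _ _ _))).
  exact: diff_derivable.
have Ei : forall i, Evec P (fun e => grad (fun ps => ln (pc ps y (g (h theta0) e x))) psi0) 0 i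
    = 'D_(delta_mx 0 i) S psi0.
  move=> i; rewrite mxE Expect_row.
  have H : 'D_(delta_mx 0 i, (0:'rV[R]_b)) (fun w : 'rV[R]_c * 'rV[R]_b => SUP P pc g x y w.1 w.2) (psi0, h theta0) =
      Expect P (fun e => 'D_(delta_mx 0 i, (0:'rV[R]_b))
      (fun w' : 'rV[R]_c * 'rV[R]_b => sup_eps pc g x y w'.1 w'.2 e) (psi0, h theta0)) := DS _.
  rewrite (@D1 _ _ _ _ (fun t p => SUP P pc g x y t p) _ _ _).1 in H.
  rewrite [RHS]H; congr Expect; apply/funext => e.
  by rewrite (@D1 _ _ _ _ (fun t p => sup_eps pc g x y t p e) _ _ _).1.
have Si : forall i, lam * 'D_(delta_mx 0 i) S psi0 = 0.
  move=> i; have := congr1 (fun M : 'rV[R]_c => M 0 i) stat_psi.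
  rewrite /grad !mxE.
  have eqf : (fun ps => objective P pd qd pc g x y lam ps theta0 (h theta0)) =
     cst (ELBO P pd qd g x theta0 (h theta0)) + lam \*: S by apply/funext.
  rewrite eqf deriveD; last 2 first.
  - exact: derivable_cst.
  - exact/derivableZ.
  by rewrite deriveZ // derive_cst add0r.
split.
  by apply/rowP => i; rewrite [in RHS]mxE -(Si i) -Ei; exact: mxE.
move=> lam0; apply/rowP => i; rewrite Ei mxE.
by move: (Si i) => /eqP; rewrite mulf_eq0 gt_eqF //= => /eqP.
Qed.
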